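(* Let $m\ge1$, $q=2^m$, let $n$ be even, let $L$ be a $2$-linear polynomial over $\mathbb F_{q^n}$ such that $\mathrm{Tr}(x^{q+1})+L(x)$ is a permutation polynomial of $\mathbb F_{q^n}$, and let $\lambda$ be a $2$-linear polynomial over $\mathbb F_{q^n}$ that permutes $\mathbb F_{q^n}$. If $\lambda(\mathbb F_{q^2})=\mathbb F_{q^2}$, then both $\mathrm{Tr}(x^{q+1})+\lambda(x)$ and $\mathrm{Tr}(x^{q+1})+L(\lambda(x))$ are permutation polynomials of $\mathbb F_{q^n}$. If $\lambda(\mathbb F_q)=\mathbb F_q$, then $\mathrm{Tr}(x^{q+1})+\lambda(L(x))$ is a permutation polynomial of $\mathbb F_{q^n}$.
   Context: $\mathrm{Tr}$ denotes the trace map of $\mathbb F_{q^n}$ over $\mathbb F_q$. A $2$-linear polynomial over $\mathbb F_{q^n}$ has the form $\sum_{j=0}^{mn-1}a_jx^{2^j}$ with $a_j\in\mathbb F_{q^n}$. Polynomials are regarded as maps on $\mathbb F_{q^n}$. *)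

(* Defs.v *)
From mathcomp Require Import all_boot all_order all_algebra all_field.
Set Implicit Arguments. Unset Strict Implicit. Unset Printing Implicit Defensive.
Import GRing.Theory.
Local Open Scope ring_scope.

Definition Tr (F : finFieldType) (m n : nat) (y : F) : F :=
  \sum_(i < n) y ^+ ((2 ^ m) ^ i)%N.

Definition lin2 (F : finFieldType) (k : nat) (a : 'I_k -> F) (x : F) : F :=
  \sum_(j < k) a j * x ^+ (2 ^ j)%N.

(* The subfield F_r of F (r a power of the characteristic): {x | x^r = x}. *)
Definition subF (F : finFieldType) (r : nat) : {set F} := [set x : F | x ^+ r == x].

Definition is_perm (F : finFieldType) (f : F -> F) : Prop := bijective f.

(* Main.v *)
Require Import Defs.
From mathcomp Require Import all_boot all_order all_algebra all_field.
From mathcomp Require Import ring.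
Set Implicit Arguments. Unset Strict Implicit. Unset Printing Implicit Defensive.
Import GRing.Theory.
Local Open Scope ring_scope.

Section Helpers.
Variable F : finFieldType.
Variables m n : nat.
Hypothesis hm : (1 <= m)%N.
Hypothesis hn : ~~ odd n.
Hypothesis hF : #|F| = (2 ^ (m * n))%N.

Local Notation q := (2 ^ m)%N.

Lemma n_gt0 : (0 < n)%N.
Proof.
case: n hF => // h; have := finNzRing_gt1 F; by rewrite h muln0.
Qed.

Lemma char2 : 2 \in [pchar F].
Proof. exact: (card_finPcharP hF). Qed.

Lemma frobD k (x y : F) : (x + y) ^+ (2 ^ k) = x ^+ (2 ^ k) + y ^+ (2 ^ k).
Proof.
apply: exprDn_pchar; by rewrite pnatX (pnatE _ (isT : prime 2)) char2.
Qed.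

Lemma frobq (x y : F) : (x + y) ^+ q = x ^+ q + y ^+ q.
Proof. exact: frobD. Qed.

Lemma qpow_card (x : F) : x ^+ (q ^ n) = x.
Proof. by rewrite -expnM -hF expf_card. Qed.

Lemma frobqi i (x y : F) : (x + y) ^+ (q ^ i) = x ^+ (q ^ i) + y ^+ (q ^ i).
Proof. by rewrite -expnM frobD. Qed.

Lemma Tr_add (x y : F) : Tr m n (x + y) = Tr m n x + Tr m n y.
Proof. by rewrite /Tr -big_split /=; apply: eq_bigr => i _; rewrite frobqi. Qed.

Lemma Tr0 : Tr m n (0 : F) = 0.
Proof. by rewrite /Tr big1 // => i _; rewrite expr0n expn_eq0 expn_eq0. Qed.

Lemma Tr_frob (x : F) : Tr m n (x ^+ q) = Tr m n x.
Proof.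
have n0 := n_gt0.
rewrite /Tr; case: n n0 qpow_card => // k _ qc.
rewrite big_ord_recr /= [RHS]big_ord_recl /= -exprM -expnS qc expn0 expr1 addrC.
congr (_ + _); apply: eq_bigr => i _; by rewrite -exprM -expnS.
Qed.

Lemma Tr_pow (x : F) : (Tr m n x) ^+ q = Tr m n x.
Proof.
rewrite -[RHS]Tr_frob /Tr.
elim/big_rec2: _ => [|i a b _ <-]; first by rewrite expr0n expn_eq0.
by rewrite frobq -!exprM mulnC.
Qed.


Definition Q (x : F) := Tr m n (x ^+ q.+1).
Definition B (y a : F) := Tr m n (y ^+ q * a + y * a ^+ q).
Definition dd (a : F) := a ^+ (q ^ n.-1) + a ^+ q.

Lemma Q_add (x a : F) : Q (x + a) = Q x + Q a + B x a.
Proof.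
rewrite /Q /B -!Tr_add; congr Tr.
rewrite exprSr frobq !exprSr; ring.
Qed.

Lemma Q0 : Q 0 = 0.
Proof. by rewrite /Q expr0n /= Tr0. Qed.

Lemma pow_fix (c : F) i : c ^+ q = c -> c ^+ (q ^ i) = c.
Proof.
move=> h; elim: i => [|i IH]; first by rewrite expr1.
by rewrite expnSr exprM IH h.
Qed.

Lemma Tr_scal (c z : F) : c ^+ q = c -> Tr m n (c * z) = c * Tr m n z.
Proof.
move=> h; rewrite /Tr mulr_sumr; apply: eq_bigr => i _.
by rewrite exprMn; congr (_ * _); apply: pow_fix.
Qed.

Lemma Qsub (a : F) : a ^+ (q ^ 2) = a -> Q a = 0.
Proof.
move=> h; have hc : (a ^+ q.+1) ^+ q = a ^+ q.+1.
  rewrite -exprM mulSn exprD.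
  have -> : (q * q)%N = (q ^ 2)%N by rewrite expnS expn1.
  by rewrite h exprSr.
have -> : Q a = \sum_(i < n) a ^+ q.+1.
  by rewrite /Q /Tr; apply: eq_bigr => i _; apply: pow_fix.
rewrite sumr_const card_ord.
have -> : n = (2 * n./2)%N by rewrite -{1}(odd_double_half n) (negbTE hn) add0n mul2n.
by rewrite mulrnA mulr2n addrr_pchar2 ?char2 // mul0rn.
Qed.

Lemma qn_split : (q ^ n.-1 * q)%N = (q ^ n)%N.
Proof. by rewrite -expnSr prednK // n_gt0. Qed.

Lemma dd_pow (a : F) : dd a ^+ q = a + a ^+ (q ^ 2).
Proof. by rewrite /dd frobq -!exprM qn_split qpow_card. Qed.

Lemma dd_zero (a : F) : (dd a == 0) = (a ^+ (q ^ 2) == a).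
Proof.
apply/idP/idP.
  move/eqP=> h; have := dd_pow a; rewrite h expr0n expn_eq0 /=.
  move/esym/eqP; rewrite addr_eq0 oppr_pchar2 ?char2 //; by rewrite eq_sym.
move/eqP=> h; have := dd_pow a; rewrite h addrr_pchar2 ?char2 // => /eqP.
by rewrite expf_eq0 expn_gt0 /=.
Qed.

Lemma B_eq (y a : F) : B y a = Tr m n (y * dd a).
Proof.
rewrite /B /dd mulrDr !Tr_add; congr (_ + _).
rewrite -[RHS]Tr_frob exprMn -exprM qn_split qpow_card //.
Qed.

Lemma Tr_nz : exists z : F, Tr m n z != 0.
Proof.
apply/existsP; rewrite -negb_forall; apply/negP => /forallP /= H0.
pose P : {poly F} := \sum_(i < n) 'X^(q ^ i).
have hP : forall z, P.[z] = Tr m n z.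
  by move=> z; rewrite /P horner_sum; apply: eq_bigr => i _; rewrite hornerXn.
have q1 : (1 < q)%N by rewrite -{1}(expn0 2) ltn_exp2l.
have P0 : P = 0.
  apply: (@roots_geq_poly_eq0 _ P (enum F)).
  - by apply/allP => z _; rewrite /root hP; exact: H0.
  - exact: enum_uniq.
  rewrite -cardE hF expnM (leq_trans (size_sum _ _ _)) //.
  apply/bigmax_leqP => i _; rewrite size_polyXn ltn_exp2l //.
have := congr1 (fun p : {poly F} => p`_1) P0.
rewrite coef0 /P coef_sum.
case: n n_gt0 => // k _.
rewrite big_ord_recl /= coefXn expn0 eqxx big1 ?addr0.
  by move/eqP; rewrite oner_eq0.
move=> i _; rewrite coefXn -[X in (X == _)](expn0 q) eqn_exp2l //.
Qed.

Lemma Tr_onto (d c : F) : d != 0 -> c ^+ q = c -> exists y, Tr m n (y * d) = c.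
Proof.
move=> dn0 hc; have [z0 tn0] := Tr_nz; set t := Tr m n z0 in tn0.
have ht : t ^+ q = t by exact: Tr_pow.
exists ((c / t) * z0 / d).
rewrite mulfVK // Tr_scal -/t ?mulfVK //.
by rewrite exprMn exprVn hc ht.
Qed.

Definition S1 := subF F q.
Definition S2 := subF F (q ^ 2).

Definition good (M : F -> F) :=
  forall a, a != 0 -> (a \in S2 -> M a != 0) /\ (a \notin S2 -> M a \notin S1).

Lemma inS1 x : (x \in S1) = (x ^+ q == x).
Proof. by rewrite inE. Qed.
Lemma inS2 x : (x \in S2) = (x ^+ (q ^ 2) == x).
Proof. by rewrite inE. Qed.

Lemma perm_iff (M : F -> F) : (forall x y, M (x + y) = M x + M y) ->
  is_perm (fun x => Q x + M x) <-> good M.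
Proof.
move=> Madd; have M0 : M 0 = 0.
  by apply/esym; have := Madd 0 0; rewrite addr0 => /(canLR (addrK _)); rewrite subrr.
have c2 := char2.
split.
  move=> /bij_inj inj a an0; split.
    rewrite inS2 => /eqP aS; apply/negP => /eqP Ma0; move/eqP: an0; apply.
    by apply: inj => /=; rewrite Ma0 Q0 M0 !addr0 Qsub.
  move=> aS2; apply/negP; rewrite inS1 => /eqP hMa.
  have dn0 : dd a != 0 by rewrite dd_zero -inS2.
  have [|y hy] := @Tr_onto (dd a) (M a + Q a) dn0; first by rewrite frobq hMa /Q Tr_pow.
  move/eqP: an0; apply; apply: (@addrI _ y); rewrite addr0; apply: inj => /=.
  rewrite Q_add Madd B_eq hy.
  have -> : Q y + Q a + (M a + Q a) + (M y + M a) = Q y + M y + (Q a + Q a) + (M a + M a) by ring.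
  by rewrite !addrr_pchar2 // !addr0.
move=> G; apply: injF_bij => x y /= hxy.
apply/eqP; rewrite -subr_eq0; apply/negPn/negP => an0.
have [G1 G2] := G _ an0.
have xe : x = y + (x - y) by rewrite addrC subrK.
move: hxy; rewrite {1 2}xe Q_add Madd B_eq.
have -> : Q y + Q (x - y) + Tr m n (y * dd (x - y)) + (M y + M (x - y)) =
  (Q y + M y) + (Q (x - y) + Tr m n (y * dd (x - y)) + M (x - y)) by ring.
move/(canRL (addKr _)); rewrite addNr => /esym h0.
have [aS|aS] := boolP (x - y \in S2).
  move: (G1 aS); rewrite inS2 in aS.
  move: h0; rewrite Qsub ?(eqP aS) // (eqP (_ : dd (x - y) == 0)).
    by rewrite mulr0 Tr0 !add0r => ->; rewrite eqxx.
  by rewrite dd_zero.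
move: (G2 aS); rewrite inS1.
move/esym/eqP: h0; rewrite addr_eq0 (oppr_pchar2 c2 (M (x - y))) => /eqP <-.
by rewrite frobq /Q !Tr_pow eqxx.
Qed.


Lemma lin2_add k (c : 'I_k -> F) (x y : F) : lin2 c (x + y) = lin2 c x + lin2 c y.
Proof. by rewrite /lin2 -big_split; apply: eq_bigr => j _; rewrite frobD mulrDr. Qed.

Lemma lin2_0 k (c : 'I_k -> F) : lin2 c 0 = 0.
Proof. by apply/esym; have := lin2_add c 0 0; rewrite addr0 => /(canLR (addrK _)); rewrite subrr. Qed.

Lemma main_sec (aL al : 'I_(m * n) -> F)
  (hL : is_perm (fun x => Q x + lin2 aL x))
  (hl : is_perm (lin2 al)) :
  (lin2 al @: subF F ((2 ^ m) ^ 2)%N = subF F ((2 ^ m) ^ 2)%N ->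
     is_perm (fun x => Q x + lin2 al x) /\
     is_perm (fun x => Q x + lin2 aL (lin2 al x))) /\
  (lin2 al @: subF F (2 ^ m)%N = subF F (2 ^ m)%N ->
     is_perm (fun x => Q x + lin2 al (lin2 aL x))).
Proof.
have inj_l := bij_inj hl.
have l0 := lin2_0 al.
have gL : good (lin2 aL) := (perm_iff (lin2_add aL)).1 hL.
have S1S2 : forall x, x \in S1 -> x \in S2.
  by move=> x; rewrite inS1 inS2 => /eqP h; rewrite pow_fix.
split.
  move=> E; have E' : lin2 al @: S2 = S2 := E.
  have back : forall a, lin2 al a \in S2 -> a \in S2.
    by move=> a; rewrite -{1}E' => /imsetP [b bS /inj_l ->].
  have fwd : forall a, a \in S2 -> lin2 al a \in S2.
    by move=> a aS; rewrite -E'; apply: imset_f.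
  split.
    apply/(perm_iff (lin2_add al)) => a an0; split.
      move=> _; apply/eqP => h; move/eqP: an0; apply; apply: inj_l; by rewrite h l0.
    by move=> aS; apply/negP => /S1S2 /back; apply/negP.
  apply/(perm_iff (fun x y => etrans (congr1 (lin2 aL) (lin2_add al x y)) (lin2_add aL _ _))).
  move=> a an0; have bn0 : lin2 al a != 0.
    by apply/eqP => h; move/eqP: an0; apply; apply: inj_l; rewrite h l0.
  have [g1 g2] := gL _ bn0; split => aS; first exact: g1 (fwd _ aS).
  by apply: g2; apply/negP => /back; apply/negP.
move=> E; have E' : lin2 al @: S1 = S1 := E.
have back : forall a, lin2 al a \in S1 -> a \in S1.
  by move=> a; rewrite -{1}E' => /imsetP [b bS /inj_l ->].
apply/(perm_iff (fun x y => etrans (congr1 (lin2 al) (lin2_add aL x y)) (lin2_add al _ _))).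
move=> a an0; have [g1 g2] := gL a an0; split => aS.
  apply/eqP => h; move/eqP: (g1 aS); apply; apply: inj_l; by rewrite h l0.
by apply/negP => /back H; have := g2 aS; rewrite H.
Qed.

End Helpers.
Unset Implicit Arguments.

Theorem mainTheorem14 (F : finFieldType) (m n : nat)
  (hm : (1 <= m)%N) (hn : ~~ odd n) (hF : #|F| = (2 ^ (m * n))%N)
  (aL al : 'I_(m * n) -> F)
  (hL : is_perm (fun x => Tr m n (x ^+ (2 ^ m).+1) + lin2 aL x))
  (hl : is_perm (lin2 al)) :
  (lin2 al @: subF F ((2 ^ m) ^ 2)%N = subF F ((2 ^ m) ^ 2)%N ->
     is_perm (fun x => Tr m n (x ^+ (2 ^ m).+1) + lin2 al x) /\
     is_perm (fun x => Tr m n (x ^+ (2 ^ m).+1) + lin2 aL (lin2 al x))) /\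
  (lin2 al @: subF F (2 ^ m)%N = subF F (2 ^ m)%N ->
     is_perm (fun x => Tr m n (x ^+ (2 ^ m).+1) + lin2 al (lin2 aL x))).
Proof. exact: (@main_sec F m n hm hn hF aL al hL hl). Qed.
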